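(* Let $G$ be a connected graph having a matching bond with $m$ edges. Consider the generalized Broadcast setting in which initially there are $k_1\ge1$ ignorant agents and $k_2\ge1$ source agents (all holding $\mathcal M$), all on pairwise distinct nodes. If $k_1+k_2\le m-1$, then the adversary has a winning strategy, i.e. it can prevent forever any ignorant agent from obtaining $\mathcal M$.
   Context: A bond of a graph is a minimal edge cut: a set of edges whose removal disconnects the graph, but such that removing all but any one of its edges leaves the graph connected. A matching bond is a bond whose edges are pairwise vertex-disjoint. Broadcast model (with several initial sources): a connected base graph $G=(V,E)$. Some agents (source agents) hold a message $\mathcal M$, the others (ignorant agents) do not; initially all agents occupy pairwise distinct nodes, the initial placement being chosen by the adversary. Time proceeds in synchronous rounds; in each round: (1) the adversary removes a (possibly empty) set $E'\subseteq E$ of edges such that $(V,E\setminus E')$ is connected; (2) each agent (agents have unique IDs, local memory, and see the entire current graph, the positions of all agents and which agents hold $\mathcal M$) chooses either to stay or to traverse an edge of $E\setminus E'$ incident to its current node; (3) agents move. Whenever an ignorant agent is at the same node as an agent holding $\mathcal M$, it receives $\mathcal M$ and becomes a source agent. The adversary is adaptive and knows the agents' strategy. *)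

(* Defs.v *)
From mathcomp Require Import all_boot.
Set Implicit Arguments. Unset Strict Implicit. Unset Printing Implicit Defensive.

(* A finite simple graph on vertex type V is given by its edge set
   E : {set {set V}}, every edge being a 2-element set of vertices. *)
Definition simple_graph (V : finType) (E : {set {set V}}) : Prop :=
  forall e, e \in E -> #|e| = 2.

Definition edge_rel (V : finType) (E : {set {set V}}) : rel V :=
  fun x y => [set x; y] \in E.

Definition connected (V : finType) (E : {set {set V}}) : Prop :=
  forall x y : V, connect (edge_rel E) x y.

Definition is_bond (V : finType) (E F : {set {set V}}) : Prop :=
  [/\ F \subset E,
      ~ connected (E :\: F)
    & forall e, e \in F -> connected (E :\: (F :\ e))].

Definition matching_bond (V : finType) (E F : {set {set V}}) : Prop :=
  is_bond E F /\
  (forall e1 e2, e1 \in F -> e2 \in F -> e1 != e2 -> [disjoint e1 & e2]).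

(* A configuration of the n agents: positions and "holds M" flags. *)
Definition conf (V : finType) (n : nat) : Type :=
  ({ffun 'I_n -> V} * {ffun 'I_n -> bool})%type.

(* A (deterministic, history-dependent) joint strategy of the agents:
   given the history of past configurations together with the edge sets
   removed in those rounds, the current configuration and the set of
   edges removed in the current round, it gives for each agent the node
   it wants to go to (its current node = stay).  An illegal choice
   (a node not reachable through a present edge) is treated as "stay". *)
Definition strategy (V : finType) (n : nat) : Type :=
  seq (conf V n * {set {set V}}) -> conf V n -> {set {set V}} -> 'I_n -> V.

Definition step (V : finType) (n : nat) (E : {set {set V}})
    (tgt : 'I_n -> V) (Rt : {set {set V}}) (c : conf V n) : conf V n :=
  let pos' := [ffun a => if [set c.1 a; tgt a] \in E :\: Rt
                         then tgt a else c.1 a] in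
  (pos', [ffun a => c.2 a || [exists b, c.2 b && (pos' b == pos' a)]]).

Fixpoint run (V : finType) (n : nat) (E : {set {set V}})
    (strat : strategy V n) (R : nat -> {set {set V}}) (c0 : conf V n)
    (t : nat) : seq (conf V n * {set {set V}}) * conf V n :=
  match t with
  | 0 => ([::], c0)
  | t'.+1 =>
      let hc := run E strat R c0 t' in
      let tgt := strat hc.1 hc.2 (R t') in
      (rcons hc.1 (hc.2, R t'), step E tgt (R t') hc.2)
  end.

(* Main.v *)
Require Import Defs.
From mathcomp Require Import all_boot.
From mathcomp Require Import zify.
Set Implicit Arguments. Unset Strict Implicit. Unset Printing Implicit Defensive.

Section Aux.
Variable V : finType.

Lemma edge_rel_sym (E : {set {set V}}) : symmetric (edge_rel E).
Proof. by move=> x y; rewrite /edge_rel setUC. Qed.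

Lemma same_edge (F : {set {set V}}) e1 e2 x :
  (forall e1 e2, e1 \in F -> e2 \in F -> e1 != e2 -> [disjoint e1 & e2]) ->
  e1 \in F -> e2 \in F -> x \in e1 -> x \in e2 -> e1 = e2.
Proof.
move=> D h1 h2 x1 x2; case: (eqVneq e1 e2) => // ne.
by rewrite (disjointFr (D _ _ h1 h2 ne) x1) in x2.
Qed.

Lemma count_edges (F T : {set {set V}}) (A : {set V}) :
  (forall e1 e2, e1 \in F -> e2 \in F -> e1 != e2 -> [disjoint e1 & e2]) ->
  T \subset F -> (forall e, e \in T -> exists z, z \in A /\ z \in e) ->
  #|T| <= #|A|.
Proof.
move=> D sTF H.
pose g z := odflt set0 [pick e in F | z \in e].
apply: leq_trans (leq_imset_card g A).
apply: subset_leq_card; apply/subsetP => e eT.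
have eF := subsetP sTF _ eT.
have [z [zA ze]] := H e eT.
apply/imsetP; exists z => //; rewrite /g.
case: pickP => [e' /andP [e'F ze']|/(_ e)]; last by rewrite eF ze.
by rewrite /= (same_edge D eF e'F ze ze').
Qed.

Lemma untouched (F : {set {set V}}) n (pos : 'I_n -> V) :
  (forall e1 e2, e1 \in F -> e2 \in F -> e1 != e2 -> [disjoint e1 & e2]) ->
  n < #|F| -> exists e, e \in F /\ forall a, pos a \notin e.
Proof.
move=> D lt.
pose T := [set e in F | [exists a, pos a \in e]].
have sTF : T \subset F by apply/subsetP => e; rewrite inE => /andP [].
have cT : #|T| <= n.
  apply: leq_trans (count_edges (A := [set pos a | a in 'I_n]) D sTF _) _.
    move=> e; rewrite inE => /andP [_ /existsP [a ha]].
    by exists (pos a); split => //; apply/imsetP; exists a.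
  by apply: leq_trans (leq_imset_card _ _) _; rewrite card_ord.
have : ~~ (F \subset T).
  apply/negP => sFT; have := subset_leq_card sFT; lia.
move/subsetPn => [e eF eT]; exists e; split => // a.
apply/negP => ha; move: eT; rewrite inE eF /=; case/negP.
by apply/existsP; exists a.
Qed.

Definition cedge n (F : {set {set V}}) e0 (c : {ffun 'I_n -> V}) :=
  odflt e0 [pick e in F | [forall a, c a \notin e]].

Lemma cedge_free n (F : {set {set V}}) e0 (c : {ffun 'I_n -> V}) :
  (forall e1 e2, e1 \in F -> e2 \in F -> e1 != e2 -> [disjoint e1 & e2]) ->
  n < #|F| -> forall a, c a \notin cedge F e0 c.
Proof.
move=> D lt; have [e1 [e1F e1P]] := untouched c D lt.
rewrite /cedge; case: pickP => [e /andP [eF /forallP eP]|/(_ e1)] //=.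
by rewrite e1F /=; move/negbT/negP; case; apply/forallP.
Qed.

Lemma pick_in n (F : {set {set V}}) e0 (e0F : e0 \in F) (c : {ffun 'I_n -> V}) :
 odflt e0 [pick e in F | [forall a, c a \notin e]] \in F.
Proof. case: pickP => [e /andP [] //|_] //. Qed.

End Aux.

Theorem theorem7 (V : finType) (E F : {set {set V}}) (k1 k2 : nat) :
  simple_graph E -> connected E -> matching_bond E F ->
  1 <= k1 -> 1 <= k2 -> k1 + k2 <= #|F| - 1 ->
  forall (inf0 : {ffun 'I_(k1 + k2) -> bool}),
  #|[set a | inf0 a]| = k2 ->
  forall strat : strategy V (k1 + k2),
  exists pos0 : {ffun 'I_(k1 + k2) -> V}, injective pos0 /\
  exists R : nat -> {set {set V}},
    (forall t, R t \subset E /\ connected (E :\: R t)) /\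
    (forall t a, ~~ inf0 a -> ~~ (run E strat R (pos0, inf0) t).2.2 a).
Proof.
move=> _ _ [[sFE nconn minF] D] k1p k2p hk inf0 _ strat.
set n := k1 + k2.
have nF : n < #|F| by rewrite /n; lia.
have [x [y nxy]] : exists x y, ~~ connect (edge_rel (E :\: F)) x y.
  case: (boolP [forall x, forall y, connect (edge_rel (E :\: F)) x y]).
    by move/forallP => H; exfalso; apply: nconn => x y; exact/(forallP (H x)).
  by move/forallPn => [x /forallPn [y h]]; exists x, y.
pose S := [set z | connect (edge_rel (E :\: F)) x z].
have closedS : forall p q, edge_rel (E :\: F) p q -> (p \in S) = (q \in S).
  move=> p q epq; rewrite !inE; apply/idP/idP => h.
    by apply: connect_trans h (connect1 epq).
  apply: connect_trans h _; apply: connect1; by rewrite edge_rel_sym.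
have cross : forall e, e \in F ->
    (exists z, z \in S /\ z \in e) /\ (exists z, z \in ~: S /\ z \in e).
  move=> e eF.
  suff : ~ (forall p q, p \in e -> q \in e -> (p \in S) = (q \in S)).
    move=> nmono; split.
      case: (boolP [exists z in e, z \in S]) => [/existsP [z /andP [? ?]]|].
        by exists z.
      move/existsPn => H; exfalso; apply: nmono => p q hp hq.
      by have := H p; have := H q; rewrite hp hq /= => /negbTE -> /negbTE ->.
    case: (boolP [exists z in e, z \notin S]) => [/existsP [z /andP [? ?]]|].
      by exists z; rewrite inE.
    move/existsPn => H; exfalso; apply: nmono => p q hp hq.
    by have := H p; have := H q; rewrite hp hq /= !negbK => -> ->.
  move=> mono.
  have cl : closed (edge_rel (E :\: (F :\ e))) S.
    move=> p q; rewrite /edge_rel !inE negb_and negbK => /andP [h1 h2].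
    case: (boolP ([set p; q] \in F)) => hF.
      move: h1; rewrite hF orbF => /eqP eq.
      have := mono p q; rewrite !inE; apply; by rewrite -eq !inE eqxx ?orbT.
    have := closedS p q; rewrite !inE; apply; by rewrite /edge_rel !inE hF.
  have := closed_connect cl (minF e eF x y).
  rewrite !inE connect0 => /esym yS.
  by rewrite yS in nxy.
have cS : n < #|S|.
  apply: leq_trans nF _; apply: (count_edges D (subxx F)) => e eF.
  by case: (cross e eF).
have cS' : n < #|~: S|.
  apply: leq_trans nF _; apply: (count_edges D (subxx F)) => e eF.
  by case: (cross e eF).
pose pos0 := [ffun a : 'I_n => if inf0 a then nth x (enum (~: S)) a
                               else nth x (enum S) a].
have pos0S : forall a, (pos0 a \in S) = ~~ inf0 a.
  move=> a; rewrite ffunE; case: (inf0 a) => /=.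
    have : nth x (enum (~: S)) a \in enum (~: S).
      by apply: mem_nth; rewrite -cardE; have := ltn_ord a; lia.
    by rewrite mem_enum inE => /negbTE.
  have : nth x (enum S) a \in enum S.
    by apply: mem_nth; rewrite -cardE; have := ltn_ord a; lia.
  by rewrite mem_enum.
exists pos0; split.
  move=> a b eqab.
  have := pos0S a; rewrite eqab pos0S => /negb_inj eqi.
  apply: val_inj; apply/eqP; move: eqab; rewrite !ffunE -eqi.
  case: (inf0 b) => /=; move/eqP; rewrite (nth_uniq x) ?enum_uniq // -cardE;
    by apply: leq_trans (ltn_ord _) (ltnW _).

have [e0 e0F] : exists e0, e0 \in F.
  have : 0 < #|F| by lia.
  by case/card_gt0P => e ?; exists e.
pose ch (c : conf V n) := F :\ cedge F e0 c.1.
have chF : forall c : conf V n, cedge F e0 c.1 \in F.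
  by move=> c; apply: pick_in.
have inv : forall (c : conf V n) tgt,
    c.2 = inf0 -> (forall a, (c.1 a \in S) = ~~ inf0 a) ->
    (step E tgt (ch c) c).2 = inf0 /\
    (forall a, ((step E tgt (ch c) c).1 a \in S) = ~~ inf0 a).
  move=> c tgt c2 c1.
  have eeP := cedge_free e0 c.1 D nF.
  have pS : forall a, ((step E tgt (ch c) c).1 a \in S) = ~~ inf0 a.
    move=> a; rewrite /step /= ffunE -c1.
    case: ifP => // hin; apply/esym/closedS.
    move: hin; rewrite /edge_rel /ch !inE negb_and negbK => /andP [h1 ->].
    rewrite andbT; apply/negP => hF; move: h1; rewrite hF orbF => /eqP eq.
    by move: (eeP a); rewrite -eq !inE eqxx.
  split => //.
  apply/ffunP => a; rewrite /step /= ffunE c2.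
  case ia: (inf0 a) => //=.
  apply/negbTE/existsPn => b.
  case ib: (inf0 b) => //=.
  have := pS a; have := pS b; rewrite /step /= ia ib /= => hb ha.
  by apply/negP => /eqP eq; rewrite eq ha in hb.
pose sim := fix sim (t : nat) : seq (conf V n * {set {set V}}) * conf V n :=
  match t with
  | 0 => ([::], (pos0, inf0))
  | t'.+1 => let hc := sim t' in
      (rcons hc.1 (hc.2, ch hc.2), step E (strat hc.1 hc.2 (ch hc.2)) (ch hc.2) hc.2)
  end.
exists (fun t => ch (sim t).2); split.
  move=> t; split; first by apply: subset_trans (subD1set _ _) sFE.
  exact: minF (chF _).
have runE : forall t, run E strat (fun t => ch (sim t).2) (pos0, inf0) t = sim t.
  by elim => [|t IH] //=; rewrite IH.
have invt : forall t, (sim t).2.2 = inf0 /\ forall a, ((sim t).2.1 a \in S) = ~~ inf0 a.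
  elim => [|t [IH1 IH2]] /=; first by split.
  exact: inv.
by move=> t a ia; rewrite runE (proj1 (invt t)).
Qed.
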